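(* In the setting described in the context, for every real $s>\frac n2$, $$\exp\Big(-\frac{s-\frac n2}{\tau^2}\Big)<\frac{g(s+1)}{g(s)}<\exp\Big(-\Big(1-\frac1{12\tau^2}\Big)\frac{s-\frac n2}{\tau^2}\Big).$$
   Context: Standing setting: $\Phi$ is the standard normal distribution function. Binomial law $\mathrm B_{m,p}(\{k\})=\binom mk p^k(1-p)^{m-k}$; hypergeometric law $\mathrm H_{m,r,b}(\{k\})=\binom rk\binom b{m-k}/\binom{r+b}m$ ($r,b\in\mathbb N_0$, $m\in\{0,\dots,r+b\}$, $k\in\mathbb Z$, binomial coefficients with non-integer lower index being $0$). $P$ is a symmetric (about its mean) hypergeometric or symmetric binomial law with mean $\frac n2$ and standard deviation $\sigma>0$; $N\in\mathbb N\cup\{\infty\}$ is a population size parameter of $P$ (i.e. $N=\infty$ and $P$ binomial, or $P=\mathrm H_{m,r,b}$ with $r+b=N$); $\sigma_0^2=\frac{N-1}N\sigma^2$ if $N<\infty$, $\sigma_0^2=\sigma^2$ if $N=\infty$. $\tau\in[\sigma_0,\sigma]$, $G(s)=\Phi((s-\frac n2)/\tau)$ and $g(s):=G(s)-G(s-1)$ for $s\in\mathbb R$. *)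

(* Defs.v *)
From Stdlib Require Import Reals ZArith.
From Coquelicot Require Import Coquelicot.
Open Scope R_scope.

Definition std_normal_pdf (t : R) : R := exp (- t ^ 2 / 2) / sqrt (2 * PI).
Definition Phi (x : R) : R :=
  RInt_gen std_normal_pdf (Rbar_locally m_infty) (at_point x).

Definition binZ (a : nat) (k : Z) : R :=
  if ((0 <=? k)%Z && (k <=? Z.of_nat a)%Z)%bool then Binomial.C a (Z.to_nat k) else 0.

Definition binom_pmf (m : nat) (p : R) (k : Z) : R :=
  binZ m k * p ^ (Z.to_nat k) * (1 - p) ^ (m - Z.to_nat k).

Definition hyper_pmf (m r b : nat) (k : Z) : R :=
  binZ r k * binZ b (Z.of_nat m - k) / Binomial.C (r + b) m.

Definition law_mean (m : nat) (P : Z -> R) : R :=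
  sum_f_R0 (fun k => INR k * P (Z.of_nat k)) m.
Definition law_var (m : nat) (P : Z -> R) : R :=
  sum_f_R0 (fun k => (INR k - law_mean m P) ^ 2 * P (Z.of_nat k)) m.

(* Population size: None stands for N = infinity. *)
Definition sym_law (n : nat) (N : option nat) (sigma : R) (P : Z -> R) : Prop :=
  exists m : nat,
    ((N = None /\ exists p, 0 <= p <= 1 /\ forall k, P k = binom_pmf m p k)
     \/ (exists r b : nat, N = Some (r + b)%nat /\ (m <= r + b)%nat /\
           forall k, P k = hyper_pmf m r b k))
    /\ law_mean m P = INR n / 2
    /\ sqrt (law_var m P) = sigma
    /\ (forall k : Z, P k = P (Z.of_nat n - k)%Z).

Definition sigma0 (N : option nat) (sigma : R) : R :=
  match N with
  | None => sigma
  | Some N' => sqrt ((INR N' - 1) / INR N' * sigma ^ 2)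
  end.

Definition G (n : nat) (tau s : R) : R := Phi ((s - INR n / 2) / tau).
Definition g (n : nat) (tau s : R) : R := G n tau s - G n tau (s - 1).

(* Main.v *)
Require Import Defs.
From Stdlib Require Import Reals ZArith Lra Lia Psatz.
From Coquelicot Require Import Coquelicot.
Open Scope R_scope.

Lemma cosh_gt_mono a b : 0 <= a < b -> cosh a < cosh b.
Proof.
  intros [Ha Hab]. unfold cosh. rewrite !exp_Ropp.
  assert (H1 : 1 <= exp a). { rewrite <- exp_0. destruct Ha as [Ha|Ha]; [left; apply exp_increasing; lra| rewrite Ha; lra]. }
  assert (H2 : exp a < exp b) by (apply exp_increasing; lra).
  set (p := exp a) in *. set (q := exp b) in *.
  assert (0 < p*q) by nra.
  assert (/p - /q = (q - p) / (p*q)) by (field; lra).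
  assert ((q-p)/(p*q) < q - p).
  { unfold Rdiv; rewrite <- (Rmult_1_r (q-p)) at 2; apply Rmult_lt_compat_l; [lra|].
    rewrite <- Rinv_1; apply Rinv_lt_contravar; nra. }
  lra.
Qed.

Lemma cosh_even x : cosh (- x) = cosh x.
Proof. unfold cosh. rewrite Ropp_involutive. lra. Qed.

Lemma cosh_abs x : cosh (Rabs x) = cosh x.
Proof. unfold Rabs; destruct (Rcase_abs x); [apply cosh_even|reflexivity]. Qed.

Lemma cosh_le_abs c d : Rabs c <= Rabs d -> cosh c <= cosh d.
Proof.
  intros H. rewrite <- (cosh_abs c), <- (cosh_abs d).
  destruct H as [H|H]; [left; apply cosh_gt_mono; split; [apply Rabs_pos|exact H]| rewrite H; lra].
Qed.

Lemma cosh_ge1 x : 1 <= cosh x.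
Proof. rewrite <- cosh_0. apply cosh_le_abs. rewrite Rabs_R0. apply Rabs_pos. Qed.

Lemma cosh_mul A B : cosh A * cosh B = (cosh (A + B) + cosh (A - B)) / 2.
Proof.
  unfold cosh. unfold Rminus. rewrite !Ropp_plus_distr, Ropp_involutive, !exp_plus.
  rewrite !exp_Ropp. field. split; apply Rgt_not_eq, exp_pos.
Qed.

Lemma cosh_ratio_mono x y t1 t2 : 0 <= y <= x -> 0 <= t1 <= t2 ->
  cosh (x*t1) * cosh (y*t2) <= cosh (x*t2) * cosh (y*t1).
Proof.
  intros Hy Ht. rewrite !cosh_mul.
  assert (cosh (x * t1 + y * t2) <= cosh (x * t2 + y * t1)).
  { apply cosh_le_abs. rewrite !Rabs_pos_eq; nra. }
  assert (cosh (x * t1 - y * t2) <= cosh (x * t2 - y * t1)).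
  { apply cosh_le_abs. apply Rabs_le. rewrite (Rabs_pos_eq (x*t2 - y*t1)); nra. }
  lra.
Qed.
Lemma dpl_of f x l : is_derive f x l -> derivable_pt_lim f x l.
Proof. apply is_derive_Reals. Qed.

Lemma Gz_pos z : 0 < z -> 0 < z * cosh z - sinh z.
Proof.
  intros Hz.
  destruct (MVT_cor2 (fun z => z * cosh z - sinh z) (fun z => z * sinh z) 0 z Hz) as [c [Hc1 Hc2]].
  { intros c _. apply dpl_of. unfold cosh, sinh. auto_derive; [auto|].
    rewrite Rmult_1_l. field. }
  rewrite Rmult_0_l, sinh_0 in Hc1.
  assert (0 < sinh c) by (rewrite <- sinh_0; apply sinh_lt; lra).
  assert (0 < c * sinh c * (z - 0)) by (apply Rmult_lt_0_compat; nra).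
  lra.
Qed.

Lemma Fz_pos z : 0 < z -> 0 < z^2 * sinh z / 3 - z * cosh z + sinh z.
Proof.
  intros Hz.
  destruct (MVT_cor2 (fun z => z^2 * sinh z / 3 - z * cosh z + sinh z)
     (fun z => z / 3 * (z * cosh z - sinh z)) 0 z Hz) as [c [Hc1 Hc2]].
  { intros c _. apply dpl_of. unfold cosh, sinh. auto_derive; [auto|]. field. }
  rewrite sinh_0 in Hc1.
  assert (0 < c * cosh c - sinh c) by (apply Gz_pos; lra).
  assert (0 < c / 3 * (c * cosh c - sinh c) * (z - 0)) by
    (apply Rmult_lt_0_compat; [apply Rmult_lt_0_compat|]; lra).
  lra.
Qed.

Definition Sm (z : R) : R := sinh z / z * exp (- (z^2 / 6)).

Lemma Sm_decr y x : 0 < y < x -> Sm x < Sm y.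
Proof.
  intros [Hy Hyx].
  destruct (MVT_cor2 Sm
     (fun z => - exp (- (z^2/6)) / z^2 * (z^2 * sinh z / 3 - z * cosh z + sinh z)) y x Hyx) as [c [Hc1 Hc2]].
  { intros c Hc. apply dpl_of. unfold Sm, cosh, sinh. auto_derive; [lra|].
    replace (c * (c * 1) * / 6) with (c^2/6) by (unfold Rdiv; ring). field. lra. }
  assert (0 < exp (- (c^2/6)) / c^2 * (c^2 * sinh c / 3 - c * cosh c + sinh c) * (x - y)).
  { apply Rmult_lt_0_compat; [apply Rmult_lt_0_compat|]; try lra.
    - apply Rdiv_lt_0_compat; [apply exp_pos| nra].
    - apply Fz_pos; lra. }
  assert (Hm : - exp (- (c^2/6)) / c^2 * (c^2 * sinh c / 3 - c * cosh c + sinh c) * (x - y)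
     = - (exp (- (c^2/6)) / c^2 * (c^2 * sinh c / 3 - c * cosh c + sinh c) * (x - y))) by (unfold Rdiv; ring).
  lra.
Qed.


Lemma Sm_small y : 0 < y <= 1 -> Sm y <= 1 + y * sinh 1.
Proof.
  intros [Hy Hy1].
  destruct (MVT_cor2 sinh cosh 0 y Hy) as [c [Hc1 Hc2]].
  { intros e _. apply derivable_pt_lim_sinh. }
  destruct (MVT_cor2 cosh sinh 0 y Hy) as [d [Hd1 Hd2]].
  { intros e _. apply derivable_pt_lim_cosh. }
  rewrite sinh_0 in Hc1. rewrite cosh_0 in Hd1.
  assert (Hcc : cosh c <= cosh y) by (apply cosh_le_abs; rewrite !Rabs_pos_eq; lra).
  assert (Hsd : sinh d <= sinh 1) by (left; apply sinh_lt; lra).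
  assert (Hsp : 0 < sinh d) by (rewrite <- sinh_0; apply sinh_lt; lra).
  assert (He : exp (- (y^2/6)) <= 1).
  { rewrite <- exp_0. destruct (Req_dec y 0); [lra|]. left; apply exp_increasing. nra. }
  assert (Hsy : sinh y / y = cosh c) by (field_simplify_eq; [lra|lra]).
  unfold Sm. rewrite Hsy.
  assert (1 <= cosh c) by (rewrite <- cosh_0; apply cosh_le_abs; rewrite Rabs_R0; apply Rabs_pos).
  assert (cosh c * exp (- (y^2/6)) <= cosh c) by nra.
  nra.
Qed.

Lemma Sm_lt1 x : 0 < x -> Sm x < 1.
Proof.
  intros Hx.
  assert (H1 : Sm x < Sm (x/2)) by (apply Sm_decr; lra).
  assert (Hs1 : 0 < sinh 1) by (rewrite <- sinh_0; apply sinh_lt; lra).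
  destruct (Rle_or_lt (Sm (x/2)) 1) as [H|H]; [lra|].
  exfalso.
  set (d := Sm (x/2) - 1).
  set (y := Rmin (x/4) (Rmin 1 (d / (2 * sinh 1)))).
  assert (Hd : 0 < d / (2 * sinh 1)) by (apply Rdiv_lt_0_compat; unfold d; lra).
  assert (Hy0 : 0 < y) by (unfold y; repeat apply Rmin_glb_lt; lra).
  assert (Hy1 : y <= x/4) by apply Rmin_l.
  assert (Hy2 : y <= 1) by (unfold y; eapply Rle_trans; [apply Rmin_r|apply Rmin_l]).
  assert (Hy3 : y <= d / (2 * sinh 1)) by (unfold y; eapply Rle_trans; [apply Rmin_r|apply Rmin_r]).
  assert (H2 : Sm (x/2) < Sm y) by (apply Sm_decr; lra).
  assert (H3 : Sm y <= 1 + y * sinh 1) by (apply Sm_small; lra).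
  assert (H4 : y * sinh 1 <= d/2).
  { apply Rmult_le_compat_r with (r := sinh 1) in Hy3; [|lra].
    replace (d / (2 * sinh 1) * sinh 1) with (d/2) in Hy3 by (field; lra). exact Hy3. }
  unfold d in *. lra.
Qed.
Lemma pdf_ex_derive t : ex_derive std_normal_pdf t.
Proof. unfold std_normal_pdf. auto_derive. auto. Qed.

Lemma pdf_cont t : continuous std_normal_pdf t.
Proof. apply (ex_derive_continuous (K:=R_AbsRing) (V:=R_NormedModule)), pdf_ex_derive. Qed.

Lemma pdf_ex_RInt a b : ex_RInt std_normal_pdf a b.
Proof. apply (ex_RInt_continuous (V:=R_CompleteNormedModule)). intros; apply pdf_cont. Qed.

Lemma pdf_pos t : 0 < std_normal_pdf t.
Proof. unfold std_normal_pdf. apply Rdiv_lt_0_compat. apply exp_pos.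
  apply sqrt_lt_R0. pose proof PI_RGT_0. lra. Qed.

Lemma exp_mono_le x y : x <= y -> exp x <= exp y.
Proof. intros [H|H]; [left; apply exp_increasing; exact H| rewrite H; lra]. Qed.

Lemma sqrt2PI_gt1 : 1 < sqrt (2 * PI).
Proof. rewrite <- sqrt_1. pose proof PI2_1. apply sqrt_lt_1; lra. Qed.

Lemma pdf_le t : std_normal_pdf t <= exp (t + 1).
Proof.
  unfold std_normal_pdf. pose proof sqrt2PI_gt1.
  assert (exp (- t ^ 2 / 2) <= exp (t + 1)) by (apply exp_mono_le; nra).
  assert (0 < exp (- t ^ 2 / 2)) by apply exp_pos.
  apply Rle_trans with (exp (- t ^ 2 / 2)); [|lra].
  unfold Rdiv. rewrite <- (Rmult_1_r (exp _)) at 2.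
  apply Rmult_le_compat_l; [lra|]. left. rewrite <- Rinv_1. apply Rinv_lt_contravar; lra.
Qed.

Lemma exp1_RInt p q : RInt (fun t => exp (t + 1)) p q = exp (q + 1) - exp (p + 1).
Proof.
  apply is_RInt_unique.
  apply (is_RInt_derive (V:=R_CompleteNormedModule) (fun t => exp (t+1)) (fun t => exp (t+1))).
  - intros x _. auto_derive; auto. ring.
  - intros x _. apply (ex_derive_continuous (K:=R_AbsRing) (V:=R_NormedModule)). auto_derive. auto.
Qed.

Lemma exp1_ex_RInt p q : ex_RInt (fun t => exp (t + 1)) p q.
Proof. apply (ex_RInt_continuous (V:=R_CompleteNormedModule)). intros x _.
  apply (ex_derive_continuous (K:=R_AbsRing) (V:=R_NormedModule)). auto_derive. auto. Qed.

Lemma pdf_int_bound p q : p <= q -> 0 <= RInt std_normal_pdf p q <= exp (q + 1) - exp (p + 1).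
Proof.
  intros Hpq. split.
  - apply RInt_ge_0; [exact Hpq| apply pdf_ex_RInt|]. intros; left; apply pdf_pos.
  - rewrite <- exp1_RInt. apply RInt_le; [exact Hpq|apply pdf_ex_RInt|apply exp1_ex_RInt|].
    intros; apply pdf_le.
Qed.

Lemma ex_Phi x : ex_RInt_gen std_normal_pdf (Rbar_locally m_infty) (at_point x).
Proof.
  unfold ex_RInt_gen, is_RInt_gen.
  apply (filterlimi_locally_cauchy (U := R_CompleteSpace)
     (F := filter_prod (Rbar_locally m_infty) (at_point x))).
  - apply filter_forall. intros [a b]; simpl. split.
    + exists (RInt std_normal_pdf a b). apply (RInt_correct (V:=R_CompleteNormedModule)). apply pdf_ex_RInt.
    + intros y1 y2 H1 H2. apply (is_RInt_unique (V:=R_CompleteNormedModule)) in H1. apply (is_RInt_unique (V:=R_CompleteNormedModule)) in H2. congruence.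
  - intros eps.
    exists (fun ab => fst ab < ln eps - 1 /\ snd ab = x). split.
    + apply Filter_prod with (fun a => a < ln eps - 1) (fun b => b = x).
      * exists (ln eps - 1). auto.
      * reflexivity.
      * intros a b Ha Hb. simpl. auto.
    + intros [u1 u2] [v1 v2] [Hu1 Hu2] [Hv1 Hv2] u' v' Hu Hv. simpl in *. subst u2 v2.
      apply (is_RInt_unique (V:=R_CompleteNormedModule)) in Hu. apply (is_RInt_unique (V:=R_CompleteNormedModule)) in Hv. subst u' v'.
      change (Rabs (RInt std_normal_pdf v1 x - RInt std_normal_pdf u1 x) < eps).
      assert (HC : RInt std_normal_pdf v1 x = RInt std_normal_pdf v1 u1 + RInt std_normal_pdf u1 x).
      { symmetry. apply (RInt_Chasles (V:=R_CompleteNormedModule)); apply pdf_ex_RInt. }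
      rewrite HC. unfold Rminus; rewrite Rplus_assoc, Rplus_opp_r, Rplus_0_r.
      assert (Heps : exp (ln eps - 1 + 1) = eps) by (replace (ln eps - 1 + 1) with (ln eps) by ring; apply exp_ln; apply cond_pos).
      assert (Hm1 : exp (u1 + 1) < eps) by (rewrite <- Heps; apply exp_increasing; lra).
      assert (Hm2 : exp (v1 + 1) < eps) by (rewrite <- Heps; apply exp_increasing; lra).
      pose proof (exp_pos (u1+1)). pose proof (exp_pos (v1+1)).
      destruct (Rle_or_lt v1 u1) as [Hle|Hlt].
      * destruct (pdf_int_bound v1 u1 Hle). rewrite Rabs_pos_eq; lra.
      * destruct (pdf_int_bound u1 v1 (Rlt_le _ _ Hlt)).
        rewrite <- (opp_RInt_swap (V:=R_CompleteNormedModule)) by apply pdf_ex_RInt.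
        change (Rabs (- RInt std_normal_pdf u1 v1) < eps). rewrite Rabs_Ropp, Rabs_pos_eq; lra.
Qed.

Lemma Phi_diff x y : Phi x - Phi y = RInt std_normal_pdf y x.
Proof.
  unfold Phi.
  rewrite <- (RInt_gen_Chasles (V:=R_CompleteNormedModule) (Fa := Rbar_locally m_infty) (Fc := at_point x) std_normal_pdf y).
  - rewrite RInt_gen_at_point by apply pdf_ex_RInt. change (plus ?a ?b) with (a + b). ring.
  - apply ex_Phi.
  - apply ex_RInt_gen_at_point. apply pdf_ex_RInt.
Qed.
Ltac exri := apply (ex_RInt_continuous (V:=R_CompleteNormedModule)); intros;
  apply (ex_derive_continuous (K:=R_AbsRing) (V:=R_NormedModule));
  unfold std_normal_pdf, cosh, sinh; auto_derive; auto.

Definition Cf (H c : R) : R := RInt (fun t => exp (- t ^ 2 / 2) * cosh (c * t)) 0 H.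

Lemma shift_plus c H : RInt (fun t => std_normal_pdf (c + t)) 0 H = RInt std_normal_pdf c (c + H).
Proof.
  transitivity (RInt (fun y => scal 1 (std_normal_pdf (1 * y + c))) 0 H).
  - apply RInt_ext. intros x _. change (scal 1 ?z) with (1 * z). rewrite Rmult_1_l. f_equal. ring.
  - rewrite (RInt_comp_lin (V:=R_CompleteNormedModule)) by apply pdf_ex_RInt. f_equal; ring.
Qed.

Lemma shift_minus c H : RInt (fun t => std_normal_pdf (c - t)) 0 H = RInt std_normal_pdf (c - H) c.
Proof.
  assert (E : RInt (fun y => scal (-1) (std_normal_pdf (-1 * y + c))) 0 H = RInt std_normal_pdf c (c - H)).
  { rewrite (RInt_comp_lin (V:=R_CompleteNormedModule)) by apply pdf_ex_RInt. f_equal; ring. }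
  rewrite <- (opp_RInt_swap (V:=R_CompleteNormedModule) std_normal_pdf c (c - H)) by apply pdf_ex_RInt.
  rewrite <- E.
  rewrite (RInt_ext (fun y => scal (-1) (std_normal_pdf (-1*y+c))) (fun y => opp (std_normal_pdf (c - y)))).
  - rewrite (RInt_opp (V:=R_CompleteNormedModule)) by exri. rewrite opp_opp. reflexivity.
  - intros x _. change (scal (-1) ?z) with ((-1) * z). change (opp ?z) with (- z).
    replace (-1 * x + c) with (c - x) by ring. match goal with |- ?a = ?b => change (@eq R a b) end; ring.
Qed.

Lemma Phi_block c H : RInt std_normal_pdf (c - H) (c + H)
   = 2 / sqrt (2 * PI) * exp (- c ^ 2 / 2) * Cf H c.
Proof.
  rewrite <- (RInt_Chasles (V:=R_CompleteNormedModule) _ (c - H) c (c + H)) by apply pdf_ex_RInt.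
  rewrite <- shift_plus, <- shift_minus.
  change (plus ?a ?b) with (a + b). rewrite Rplus_comm.
  rewrite <- (RInt_plus (V:=R_CompleteNormedModule)) by exri.
  unfold Cf. rewrite <- (RInt_scal (V:=R_CompleteNormedModule)) by exri.
  apply RInt_ext. intros t _. change (plus ?a ?b) with (a + b). change (scal ?a ?b) with (a * b).
  unfold std_normal_pdf, cosh.
  replace (- (c + t) ^ 2 / 2) with (- c ^ 2 / 2 + (- t ^ 2 / 2 + - (c * t))) by field.
  replace (- (c - t) ^ 2 / 2) with (- c ^ 2 / 2 + (- t ^ 2 / 2 + (c * t))) by field.
  rewrite !exp_plus. match goal with |- ?a = ?b => change (@eq R a b) end. field. apply Rgt_not_eq, Rlt_gt. pose proof sqrt2PI_gt1. lra.
Qed.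

Ltac toR := match goal with |- ?a = ?b => change (@eq R a b) end.

Definition Iu (H c : R) : R := RInt (fun t => cosh (c * t)) 0 H.

Lemma RInt_lin2 (f g : R -> R) a b p q : ex_RInt f a b -> ex_RInt g a b ->
  RInt (fun t => p * f t - q * g t) a b = p * RInt f a b - q * RInt g a b.
Proof.
  intros Hf Hg.
  rewrite (RInt_ext (fun t => p * f t - q * g t) (fun t => minus (scal p (f t)) (scal q (g t)))) by reflexivity.
  rewrite (RInt_minus (V:=R_CompleteNormedModule)).
  - rewrite !(RInt_scal (V:=R_CompleteNormedModule)) by assumption. reflexivity.
  - apply (ex_RInt_scal (V:=R_CompleteNormedModule)); assumption.
  - apply (ex_RInt_scal (V:=R_CompleteNormedModule)); assumption.
Qed.

Lemma Iu_pos H c : 0 < c -> Iu H c = sinh (c * H) / c.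
Proof.
  intros Hc. unfold Iu. apply is_RInt_unique.
  replace (sinh (c * H) / c) with (minus (sinh (c * H) / c) (sinh (c * 0) / c))
    by (rewrite Rmult_0_r, sinh_0; change (minus ?a ?b) with (a - b); toR; field; lra).
  apply (is_RInt_derive (V:=R_CompleteNormedModule) (fun t => sinh (c * t) / c)).
  - intros t _. unfold sinh, cosh. auto_derive; [auto|]. toR. field. lra.
  - intros t _. apply (ex_derive_continuous (K:=R_AbsRing) (V:=R_NormedModule)).
    unfold cosh. auto_derive. auto.
Qed.

Lemma Iu_0 H : Iu H 0 = H.
Proof.
  unfold Iu. rewrite (RInt_ext _ (fun _ => 1)).
  - rewrite RInt_const. change (scal ?a ?b) with (a * b). toR. ring.
  - intros. rewrite Rmult_0_l, cosh_0. reflexivity.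
Qed.

Lemma unif_ineq H y x : 0 < H -> 0 <= y < x ->
  exp (- (H ^ 2 / 3) * x ^ 2 / 2) * Iu H x < exp (- (H ^ 2 / 3) * y ^ 2 / 2) * Iu H y.
Proof.
  intros HH [Hy Hyx].
  assert (Ex : exp (- (H ^ 2 / 3) * x ^ 2 / 2) * Iu H x = H * Sm (x * H)).
  { rewrite Iu_pos by lra. unfold Sm.
    replace (- ((x * H) ^ 2 / 6)) with (- (H ^ 2 / 3) * x ^ 2 / 2) by field.
    field. lra. }
  rewrite Ex.
  destruct Hy as [Hy|Hy].
  - assert (Ey : exp (- (H ^ 2 / 3) * y ^ 2 / 2) * Iu H y = H * Sm (y * H)).
    { rewrite Iu_pos by lra. unfold Sm.
      replace (- ((y * H) ^ 2 / 6)) with (- (H ^ 2 / 3) * y ^ 2 / 2) by field.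
      field. lra. }
    rewrite Ey. apply Rmult_lt_compat_l; [lra|]. apply Sm_decr. split; nra.
  - subst y. rewrite Iu_0. replace (- (H ^ 2 / 3) * 0 ^ 2 / 2) with 0 by field. rewrite exp_0.
    assert (Sm (x * H) < 1) by (apply Sm_lt1; nra). nra.
Qed.

Lemma w_ex_RInt c a b : ex_RInt (fun t => exp (- t ^ 2 / 2) * cosh (c * t)) a b.
Proof. exri. Qed.

Lemma cosh_ex_RInt c a b : ex_RInt (fun t => cosh (c * t)) a b.
Proof. exri. Qed.

Lemma cosh_pos x : 0 < cosh x.
Proof. pose proof (cosh_ge1 x). lra. Qed.

Lemma Cf_abs H c : Cf H c = Cf H (Rabs c).
Proof.
  unfold Cf. apply RInt_ext. intros t _. f_equal.
  unfold Rabs; destruct (Rcase_abs c); [|reflexivity].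
  rewrite <- cosh_even. f_equal. ring.
Qed.

Lemma Cf_lt H y x : 0 < H -> 0 <= y < x -> Cf H y < Cf H x.
Proof.
  intros HH Hyx. unfold Cf. apply RInt_lt; [lra| | |].
  - intros; apply (ex_derive_continuous (K:=R_AbsRing) (V:=R_NormedModule)); unfold cosh; auto_derive; auto.
  - intros; apply (ex_derive_continuous (K:=R_AbsRing) (V:=R_NormedModule)); unfold cosh; auto_derive; auto.
  - intros t Ht. apply Rmult_lt_compat_l; [apply exp_pos|]. apply cosh_gt_mono. split; nra.
Qed.

Lemma Cf_pos H y : 0 < H -> 0 < Cf H y.
Proof.
  intros HH. unfold Cf.
  replace 0 with (RInt (fun _ => 0) 0 H) at 1.
  2:{ rewrite RInt_const. change (scal ?a ?b) with (a * b). toR. ring. }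
  apply RInt_lt; [lra| | |].
  - intros; apply (ex_derive_continuous (K:=R_AbsRing) (V:=R_NormedModule)); unfold cosh; auto_derive; auto.
  - intros; apply (ex_derive_continuous (K:=R_AbsRing) (V:=R_NormedModule)); auto_derive; auto.
  - intros t Ht. apply Rmult_lt_0_compat; [apply exp_pos|apply cosh_pos].
Qed.

Lemma L2 H y x : 0 < H -> 0 <= y < x ->
  exp (- (H ^ 2 / 3) * x ^ 2 / 2) * Cf H x < exp (- (H ^ 2 / 3) * y ^ 2 / 2) * Cf H y.
Proof.
  intros HH [Hy Hyx].
  set (al := exp (- (H ^ 2 / 3) * x ^ 2 / 2)).
  set (be := exp (- (H ^ 2 / 3) * y ^ 2 / 2)).
  assert (Hal : 0 < al) by apply exp_pos.
  assert (HH2 : 0 < H^2) by nra.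
  assert (Halbe : al < be).
  { apply exp_increasing. assert (y^2 < x^2) by nra. assert (H^2 * y^2 < H^2 * x^2) by (apply Rmult_lt_compat_l; lra). lra. }
  set (psi := fun t => al * cosh (x * t) - be * cosh (y * t)).
  set (w := fun t => exp (- t ^ 2 / 2)).
  assert (Hmono : forall t1 t2, 0 <= t1 <= t2 -> psi t2 * cosh (y * t1) >= psi t1 * cosh (y * t2)).
  { intros t1 t2 Ht. unfold psi.
    pose proof (cosh_ratio_mono x y t1 t2 ltac:(lra) Ht).
    assert (al * (cosh (x * t1) * cosh (y * t2)) <= al * (cosh (x * t2) * cosh (y * t1)))
      by (apply Rmult_le_compat_l; lra).
    nra. }
  assert (Hwdec : forall t1 t2, 0 <= t1 <= t2 -> w t2 <= w t1).
  { intros t1 t2 Ht. unfold w. apply exp_mono_le. nra. }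
  assert (Ht0 : exists t0, 0 <= t0 <= H /\ forall t, 0 <= t <= H -> (w t - w t0) * psi t <= 0).
  { destruct (Rle_or_lt (psi H) 0) as [HpH|HpH].
    - exists H. split; [lra|]. intros t Ht.
      assert (psi t <= 0).
      { destruct (Rle_or_lt (psi t) 0) as [|Hpt]; [assumption|].
        pose proof (Hmono t H ltac:(lra)). pose proof (cosh_pos (y*t)). pose proof (cosh_pos (y*H)).
        nra. }
      pose proof (Hwdec t H ltac:(lra)). nra.
    - assert (Hp0 : psi 0 < 0) by (unfold psi; rewrite !Rmult_0_r, cosh_0; lra).
      assert (Hc : continuity psi).
      { intros t. apply derivable_continuous_pt, ex_derive_Reals_0. unfold psi, cosh. auto_derive. auto. }
      destruct (IVT psi 0 H Hc HH Hp0 HpH) as [t0 [Ht0 Hpt0]].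
      exists t0. split; [lra|]. intros t Ht.
      destruct (Rle_or_lt t t0) as [Htt|Htt].
      + assert (psi t <= 0).
        { destruct (Rle_or_lt (psi t) 0) as [|Hpt]; [assumption|].
          pose proof (Hmono t t0 ltac:(lra)). pose proof (cosh_pos (y*t)). pose proof (cosh_pos (y*t0)).
          nra. }
        pose proof (Hwdec t t0 ltac:(lra)). nra.
      + assert (psi t >= 0).
        { pose proof (Hmono t0 t ltac:(lra)). pose proof (cosh_pos (y*t0)).
          rewrite Hpt0 in H0. nra. }
        pose proof (Hwdec t0 t ltac:(lra)). nra. }
  destruct Ht0 as [t0 [Ht0 Hpt]].
  assert (Hw0 : 0 < w t0) by apply exp_pos.
  assert (E1 : RInt (fun t => w t * psi t) 0 H = al * Cf H x - be * Cf H y).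
  { unfold Cf. rewrite <- RInt_lin2 by apply w_ex_RInt. apply RInt_ext. intros t _.
    unfold w, psi. toR. ring. }
  assert (E2 : RInt (fun t => w t0 * psi t) 0 H = w t0 * (al * Iu H x - be * Iu H y)).
  { unfold Iu. rewrite Rmult_minus_distr_l, <- !Rmult_assoc.
    rewrite <- RInt_lin2 by apply cosh_ex_RInt. apply RInt_ext. intros t _.
    unfold psi. toR. ring. }
  assert (Hle : RInt (fun t => w t * psi t) 0 H <= RInt (fun t => w t0 * psi t) 0 H).
  { apply RInt_le; [lra| | |].
    - unfold w, psi. exri.
    - unfold psi. exri.
    - intros t Ht. pose proof (Hpt t ltac:(lra)). nra. }
  pose proof (unif_ineq H y x HH ltac:(lra)). fold al be in H0.
  assert (w t0 * (al * Iu H x - be * Iu H y) < 0).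
  { apply Rmult_lt_0_compat with (r1 := w t0) (r2 := - (al * Iu H x - be * Iu H y)) in Hw0; lra. }
  lra.
Qed.
Lemma small_var m r b P : (r + b <= 1)%nat -> (m <= r + b)%nat ->
  (forall k, P k = hyper_pmf m r b k) -> law_var m P = 0.
Proof.
  intros Hrb Hm HPk.
  destruct m as [|[|m]]; [| |lia].
  - unfold law_var, law_mean. simpl. ring.
  - assert (Hc : (r = 0 /\ b = 1 \/ r = 1 /\ b = 0)%nat) by lia.
    unfold law_var, law_mean. simpl. rewrite !HPk.
    destruct Hc as [[-> ->]|[-> ->]]; unfold hyper_pmf, binZ, Binomial.C; simpl; field.
Qed.

Lemma tau_pos n N sigma tau P : sym_law n N sigma P -> 0 < sigma ->
  sigma0 N sigma <= tau -> 0 < tau.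
Proof.
  intros HP Hs Ht.
  destruct N as [N'|]; unfold sigma0 in Ht; [|lra].
  destruct (le_lt_dec 2 N') as [H2|H2].
  - enough (0 < sqrt ((INR N' - 1) / INR N' * sigma ^ 2)) by lra.
    apply sqrt_lt_R0. apply le_INR in H2. simpl in H2.
    apply Rmult_lt_0_compat; [apply Rdiv_lt_0_compat; lra| nra].
  - exfalso. destruct HP as [m [[[HN _]|[r [b [HN [Hm HPk]]]]] [_ [Hvar _]]]]; [discriminate|].
    injection HN as HN. subst N'.
    rewrite (small_var m r b P) in Hvar by (auto; lia). rewrite sqrt_0 in Hvar. lra.
Qed.

Theorem lemma4p1 (n : nat) (N : option nat) (sigma tau : R) (P : Z -> R)
  (HP : sym_law n N sigma P) (Hsigma : 0 < sigma)
  (Htau : sigma0 N sigma <= tau <= sigma) (s : R) (Hs : INR n / 2 < s) :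
  exp (- ((s - INR n / 2) / tau ^ 2)) < g n tau (s + 1) / g n tau s /\
  g n tau (s + 1) / g n tau s
    < exp (- ((1 - 1 / (12 * tau ^ 2)) * ((s - INR n / 2) / tau ^ 2))).
Proof.
  assert (Ht : 0 < tau) by (apply (tau_pos n N sigma tau P); tauto).
  set (c0 := INR n / 2) in *.
  set (X := (s - c0) / tau ^ 2).
  set (u := (s - c0) / tau).
  set (HH := 1 / (2 * tau)).
  set (a := u + HH). set (b := u - HH).
  assert (Hu : 0 < u) by (unfold u; apply Rdiv_lt_0_compat; lra).
  assert (HHp : 0 < HH) by (unfold HH; apply Rdiv_lt_0_compat; lra).
  assert (Eg1 : g n tau (s + 1) = 2 / sqrt (2 * PI) * exp (- a ^ 2 / 2) * Cf HH a).
  { unfold g, G. fold c0. rewrite Phi_diff, <- Phi_block. f_equal; unfold a, u, HH; field; lra. }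
  assert (Eg0 : g n tau s = 2 / sqrt (2 * PI) * exp (- b ^ 2 / 2) * Cf HH (Rabs b)).
  { unfold g, G. fold c0. rewrite Phi_diff, <- Cf_abs, <- Phi_block. f_equal; unfold b, u, HH; field; lra. }
  assert (Hba : 0 <= Rabs b < a).
  { split; [apply Rabs_pos|]. unfold a, b. apply Rabs_def1; lra. }
  set (A := Cf HH a). set (B := Cf HH (Rabs b)).
  assert (HB : 0 < B) by (apply Cf_pos; lra).
  assert (HBA : B < A) by (apply Cf_lt; lra).
  assert (HL2 := L2 HH (Rabs b) a HHp Hba). fold A B in HL2.
  rewrite pow2_abs in HL2.
  assert (Hab : a ^ 2 - b ^ 2 = 2 * X).
  { unfold a, b, X, u, HH. field. lra. }
  assert (Eab : exp (- a ^ 2 / 2) = exp (- X) * exp (- b ^ 2 / 2)).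
  { rewrite <- exp_plus. f_equal. lra. }
  assert (HK : 0 < 2 / sqrt (2 * PI)) by (apply Rdiv_lt_0_compat; [lra|]; pose proof sqrt2PI_gt1; lra).
  assert (Er : g n tau (s + 1) / g n tau s = exp (- X) * (A / B)).
  { rewrite Eg1, Eg0, Eab. fold A B. pose proof sqrt2PI_gt1. pose proof (exp_pos (- b ^ 2 / 2)).
    field. repeat split; lra. }
  rewrite Er.
  assert (HX : 0 < exp (- X)) by apply exp_pos.
  assert (HAB : 1 < A / B) by (apply Rlt_div_r; lra).
  split.
  - nra.
  - set (k := HH ^ 2 / 3) in HL2.
    assert (Hk : k = 1 / (12 * tau ^ 2)) by (unfold k, HH; field; lra).
    assert (Ek : exp (- ((1 - 1 / (12 * tau ^ 2)) * X)) = exp (- X) * exp (k * X)).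
    { rewrite <- exp_plus. f_equal. rewrite Hk. ring. }
    rewrite Ek. apply Rmult_lt_compat_l; [exact HX|].
    apply Rlt_div_l; [exact HB|].
    assert (E2 : exp (- k * b ^ 2 / 2) = exp (- k * a ^ 2 / 2) * exp (k * X)).
    { rewrite <- exp_plus. f_equal. replace (b ^ 2) with (a ^ 2 - 2 * X) by lra. field. }
    rewrite E2 in HL2.
    assert (Hea : 0 < exp (- k * a ^ 2 / 2)) by apply exp_pos.
    nra.
Qed.
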